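(* Let $z_1,\ldots,z_r,\zeta_1,\ldots,\zeta_{s+1}$ be orthonormal generators of $\mathrm{Cl}_{r,s+1}$ with $\langle z_i,z_i\rangle=1$, $\langle\zeta_j,\zeta_j\rangle=-1$, and let $a_1,\ldots,a_s,b_1,\ldots,b_{r+1}$ be orthonormal generators of $\mathrm{Cl}_{s,r+1}$ with $\langle a_i,a_i\rangle=1$, $\langle b_j,b_j\rangle=-1$. Let $\Phi\colon\mathrm{Cl}_{r,s+1}\to\mathrm{Cl}_{s,r+1}$ be the algebra isomorphism determined by $\Phi(z_i)=b_ib_{r+1}$ ($i=1,\ldots,r$), $\Phi(\zeta_j)=a_jb_{r+1}$ ($j=1,\ldots,s$), $\Phi(\zeta_{s+1})=b_{r+1}$. If $(V,\langle\cdot\,,\cdot\rangle_V)$ is an admissible module of $\mathrm{Cl}_{s,r+1}$ with representation $J\colon\mathrm{Cl}_{s,r+1}\to\mathrm{End}(V)$, then $V$ with the representation $J\circ\Phi\colon\mathrm{Cl}_{r,s+1}\to\mathrm{End}(V)$ and the same scalar product $\langle\cdot\,,\cdot\rangle_V$ is an admissible $\mathrm{Cl}_{r,s+1}$-module.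
   Context: A scalar product is a real symmetric non-degenerate bilinear form. $\mathbb R^{p,q}$ is $\mathbb R^{p+q}$ with quadratic form $x_1^2+\dots+x_p^2-x_{p+1}^2-\dots-x_{p+q}^2$ and $\mathrm{Cl}_{p,q}$ the Clifford algebra generated by $\mathbb R^{p,q}$ with relation $z^2=-\langle z,z\rangle\cdot1$ (so $z_i^2=-1$, $\zeta_j^2=1$, $a_i^2=-1$, $b_j^2=1$, and distinct orthonormal generators anticommute). A $\mathrm{Cl}_{p,q}$-module is a real vector space $V$ with a representation into $\mathrm{End}(V)$, and it is admissible if $V$ has a scalar product with $\langle J_zu,v\rangle_V=-\langle u,J_zv\rangle_V$ for all $z\in\mathbb R^{p,q}$, $u,v\in V$. *)

(* Defs.v *)
From HB Require Import structures.
From mathcomp Require Import all_boot all_order all_algebra.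
From mathcomp Require Import reals.
Set Implicit Arguments. Unset Strict Implicit. Unset Printing Implicit Defensive.
Import Order.TTheory GRing.Theory Num.Theory.
Local Open Scope ring_scope.

(* Generators of Cl_{p,q} = orthonormal basis e_0,...,e_{p+q-1} of R^{p,q}
   (0-based): <e_k,e_k> = 1 for k < p and = -1 for p <= k < p+q. *)
Definition cl_norm {R : realType} (p k : nat) : R := if (k < p)%N then 1 else -1.

(* A representation J : Cl_{p,q} -> End(V) is (by the universal property of the
   Clifford algebra) the same as the family of linear maps J_{e_k}, k < p+q,
   satisfying the Clifford relations J_z^2 = -<z,z> id and anticommutation of
   distinct orthonormal generators. [J k] is the image of the generator e_k. *)
Definition Cl_module {R : realType} {V : lmodType R} (p q : nat)
    (J : nat -> V -> V) : Prop :=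
  [/\ (forall k, (k < p + q)%N -> forall (a : R) (u v : V),
          J k (a *: u + v) = a *: J k u + J k v),
      (forall k, (k < p + q)%N -> forall u : V, J k (J k u) = - (cl_norm p k) *: u)
    & (forall k l, (k < p + q)%N -> (l < p + q)%N -> k <> l ->
          forall u : V, J k (J l u) = - J l (J k u))].

Definition scalar_product {R : realType} {V : lmodType R} (B : V -> V -> R) : Prop :=
  [/\ (forall u v, B u v = B v u),
      (forall (a : R) u v w, B (a *: u + v) w = a * B u w + B v w)
    & (forall u, (forall v, B u v = 0) -> u = 0)].

Definition J_of {R : realType} {V : lmodType R} (p q : nat) (J : nat -> V -> V)
    (x : nat -> R) (u : V) : V :=
  \sum_(0 <= k < p + q) x k *: J k u.

Definition admissible {R : realType} {V : lmodType R} (p q : nat)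
    (J : nat -> V -> V) (B : V -> V -> R) : Prop :=
  [/\ Cl_module p q J, scalar_product B
    & forall (x : nat -> R) (u v : V), B (J_of p q J x u) v = - B u (J_of p q J x v)].

(* Source generators (0-based): z_{i+1} = e_i (i < r), zeta_{j+1} = e_{r+j} (j <= s).
   Target generators: a_{j+1} = e_j (j < s), b_{i+1} = e_{s+i} (i <= r).
   Phi(z_{i+1}) = b_{i+1} b_{r+1}, Phi(zeta_{j+1}) = a_{j+1} b_{r+1} (j < s),
   Phi(zeta_{s+1}) = b_{r+1}. *)
Definition J_Phi {R : realType} {V : lmodType R} (r s : nat)
    (J : nat -> V -> V) : nat -> V -> V :=
  fun k => if (k < r)%N then J (s + k)%N \o J (s + r)%N
           else if (k < r + s)%N then J (k - r)%N \o J (s + r)%N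
           else J (s + r)%N.

(* Main.v *)
Require Import Defs.
From HB Require Import structures.
From mathcomp Require Import all_boot all_order all_algebra.
From mathcomp Require Import reals zify.
Set Implicit Arguments. Unset Strict Implicit. Unset Printing Implicit Defensive.
Import Order.TTheory GRing.Theory Num.Theory.
Local Open Scope ring_scope.

Section S.
Variables (R : realType) (V : lmodType R).

Lemma dbl0 (G : zmodType) (x : G) : x = x + x -> x = 0.
Proof. move=> e; apply: (addrI x); by rewrite addr0 -e. Qed.

Lemma lin0 (f : V -> V) : (forall (a : R) u v, f (a *: u + v) = a *: f u + f v) -> f 0 = 0.
Proof. move=> H; have := H 1 0 0; rewrite !scale1r !addr0; exact: dbl0. Qed.

Lemma linN (f : V -> V) : (forall (a : R) u v, f (a *: u + v) = a *: f u + f v) ->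
  forall u, f (- u) = - f u.
Proof. move=> H u; have := H (-1) u 0; rewrite addr0 (lin0 H) addr0 !scaleN1r. by []. Qed.

Lemma linZ (f : V -> V) : (forall (a : R) u v, f (a *: u + v) = a *: f u + f v) ->
  forall a u, f (a *: u) = a *: f u.
Proof. move=> H a u; have := H a u 0; rewrite addr0 (lin0 H) addr0. by []. Qed.

Variable B : V -> V -> R.
Hypothesis hB : scalar_product B.

Lemma B0l w : B 0 w = 0.
Proof. case: hB => _ H _; have := H 1 0 0 w; rewrite !scale1r !addr0 mul1r; exact: dbl0. Qed.

Lemma BNl u w : B (- u) w = - B u w.
Proof. case: hB => _ H _; have := H (-1) u 0 w; rewrite addr0 B0l addr0 scaleN1r.
by rewrite mulN1r. Qed.

Lemma BNr u w : B w (- u) = - B w u.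
Proof. case: hB => S _ _; by rewrite S BNl S. Qed.

Lemma Bsuml (l : seq nat) (F : nat -> V) w :
  B (\sum_(i <- l) F i) w = \sum_(i <- l) B (F i) w.
Proof. case: hB => _ H _; elim: l => [|x l IH]; first by rewrite !big_nil B0l.
by rewrite !big_cons -(scale1r (F x)) H mul1r IH scale1r. Qed.

Lemma BZl a u w : B (a *: u) w = a * B u w.
Proof. case: hB => _ H _; have := H a u 0 w; by rewrite addr0 B0l addr0. Qed.

Lemma Bsumr (l : seq nat) (F : nat -> V) w :
  B w (\sum_(i <- l) F i) = \sum_(i <- l) B w (F i).
Proof. case: hB => S _ _; rewrite S Bsuml; apply: eq_bigr => i _; by rewrite S. Qed.

Lemma BZr a u w : B w (a *: u) = a * B w u.
Proof. case: hB => S _ _; by rewrite S BZl S. Qed.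

End S.

Lemma J_of_single (R : realType) (V : lmodType R) p q (J : nat -> V -> V) k u :
  (k < p + q)%N -> J_of p q J (fun i => if i == k then 1 else 0) u = J k u.
Proof.
move=> hk; rewrite /J_of (bigD1_seq k) /=; try by rewrite /index_iota subn0 ?iota_uniq ?mem_iota ?add0n.
rewrite eqxx scale1r big1 ?addr0 // => i /negbTE ->; by rewrite scale0r.
Qed.

Theorem theorem3p1 (R : realType) (V : lmodType R) (r s : nat)
    (J : nat -> V -> V) (B : V -> V -> R) :
  admissible s (r + 1) J B -> admissible r (s + 1) (J_Phi r s J) B.
Proof.
case=> [[Jlin Jsq Janti] hB Jskew].
have skew1 : forall k, (k < s + (r + 1))%N -> forall u v, B (J k u) v = - B u (J k v).
  by move=> k hk u v; rewrite -!(J_of_single J _ hk) Jskew.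
set c := (s + r)%N.
have hc : (c < s + (r + 1))%N by rewrite /c; lia.
have JN : forall k, (k < s + (r + 1))%N -> forall u, J k (- u) = - J k u.
  by move=> k hk; apply: linN; apply: Jlin.
have Jcc : forall u, J c (J c u) = u.
  by move=> u; rewrite Jsq // /cl_norm ifF ?opprK ?scale1r //; apply/negbTE; rewrite /c -leqNgt leq_addr.
pose f k := if (k < r)%N then (s + k)%N else (k - r)%N.
have Jf : forall k, (k < r + s)%N -> J_Phi r s J k = J (f k) \o J c.
  move=> k hk; rewrite /J_Phi /f; case: ifP => // _; by rewrite hk.
have Jl : J_Phi r s J (r + s)%N = J c by rewrite /J_Phi ifF ?ifF //; lia.
have frange : forall k, (k < r + s)%N -> (f k < s + (r + 1))%N /\ f k <> c.
  move=> k hk; rewrite /f /c; case: ifP => h; lia.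
have finj : forall k l, (k < r + s)%N -> (l < r + s)%N -> k <> l -> f k <> f l.
  move=> k l hk hl; rewrite /f; case: ifP; case: ifP; lia.
have anti2 : forall x y, (x < s + (r + 1))%N -> (y < s + (r + 1))%N -> x <> c -> y <> c ->
   x <> y -> forall u, J x (J c (J y (J c u))) = - J y (J c (J x (J c u))).
  move=> x y hx hy xc yc xy u.
  rewrite (Janti c y) // ?Jcc; last by move=> e; apply: yc.
  rewrite (Janti c x) // ?Jcc; last by move=> e; apply: xc.
  by rewrite JN // JN // (Janti x y) // opprK.
have skewJ : forall k, (k < r + (s + 1))%N -> forall u v,
    B (J_Phi r s J k u) v = - B u (J_Phi r s J k v).
  move=> k hk u v; have [hk'|] := ltnP k (r + s).
    rewrite Jf //= ; have [h1 h2] := frange k hk'.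
    by rewrite skew1 // skew1 // (Janti c) ?BNr ?opprK // => e; apply: h2.
  move=> hk2; have -> : k = (r + s)%N by lia.
  by rewrite Jl skew1.
split.
- split.
  + move=> k hk a u v; have [hk'|] := ltnP k (r + s).
      by rewrite Jf //= Jlin // Jlin //; case: (frange k hk').
    move=> hk2; have -> : k = (r + s)%N by lia.
    by rewrite Jl Jlin.
  + move=> k hk u; have [hk'|] := ltnP k (r + s).
      rewrite Jf //=; have [h1 h2] := frange k hk'.
      rewrite (Janti c) //; last by move=> e; apply: h2.
      rewrite Jcc JN // Jsq // /cl_norm /f.
      have [h|h] := ltnP k r.
        by rewrite ltnNge leq_addr /= opprK scaleNr.
      rewrite /= ifT; last by lia.
      by rewrite opprK scaleNr opprK.
    move=> hk2; have -> : k = (r + s)%N by lia.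
    by rewrite Jl Jcc /cl_norm ifF ?opprK ?scale1r //; lia.
  + move=> k l hk hl kl u.
    have [hk'|hk2] := ltnP k (r + s); have [hl'|hl2] := ltnP l (r + s).
    * rewrite !Jf //=; have [? ?] := frange k hk'; have [? ?] := frange l hl'.
      by apply: anti2 => //; apply: finj.
    * have -> : l = (r + s)%N by lia.
      rewrite Jf // Jl /=; have [? h2] := frange k hk'.
      by rewrite Jcc (Janti c) ?Jcc ?opprK // => e; apply: h2.
    * have -> : k = (r + s)%N by lia.
      rewrite Jl Jf // /=; have [? h2] := frange l hl'.
      by rewrite Jcc (Janti c) ?Jcc ?opprK // => e; apply: h2.
    * exfalso; lia.
- exact: hB.
- move=> x u v; rewrite /J_of Bsuml // Bsumr // -sumrN big_seq_cond [RHS]big_seq_cond.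
  apply: eq_bigr => i /andP[]; rewrite mem_iota add0n => hi _.
  rewrite BZl // BZr // skewJ //; first exact: mulrN; lia.
Qed.
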